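(* The generating function of the diagonal sums $\sum_{k \ge 1} w(n-k,k)$ (with $w(m,k)=0$ for $m<0$) is \[ \sum_{n \ge 0} \Bigl(\sum_{k \ge 1} w(n-k,k)\Bigr) q^n = \frac{q^6}{(1 - q)^3 (1 + q) (1 - 2 q^2)}. \]
   Context: A composition of $n \ge 0$ is a finite sequence $(c_1,\dots,c_t)$ of positive integers with $c_1+\cdots+c_t=n$; the empty composition is the unique composition of $0$. Let $C_{12}(n)$ be the set of compositions of $n$ all of whose parts lie in $\{1,2\}$. The number of water cells of a composition $(c_1,\dots,c_t)$ is $\sum_{i=1}^{t} \max\bigl(0, \min(\max_{j \le i} c_j, \max_{j \ge i} c_j) - c_i\bigr)$ (the number of unit squares that would hold water poured over its bargraph, in which column $i$ has height $c_i$). For $n,k \ge 0$, $W(n,k)$ is the set of compositions in $C_{12}(n)$ with exactly $k$ water cells and $w(n,k)=|W(n,k)|$. *)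

(* Defs.v *)
From mathcomp Require Import all_boot all_order all_algebra.
Set Implicit Arguments. Unset Strict Implicit. Unset Printing Implicit Defensive.
Import GRing.Theory.

Definition is_comp12 (n : nat) (c : seq nat) : bool :=
  all (fun x => (x == 1) || (x == 2)) c && (sumn c == n).

(* number of water cells: sum_i max(0, min(max_{j<=i} c_j, max_{j>=i} c_j) - c_i)
   (truncated nat subtraction realizes max(0, _)) *)
Definition water (c : seq nat) : nat :=
  \sum_(i < size c)
    (minn (foldr maxn 0 (take i.+1 c)) (foldr maxn 0 (drop i c)) - nth 0 c i).

(* w(n,k) = |W(n,k)|: a composition in C12(n) has length t <= n and parts in {1,2},
   so it is encoded injectively by a t.-tuple over 'I_3 (t <= n). *)
Definition w (n k : nat) : nat :=
  \sum_(t < n.+1)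
    #|[set u : t.-tuple 'I_3 |
        is_comp12 n (map val u) && (water (map val u) == k)]|.

(* diagonal sums  sum_{k>=1} w(n-k,k), with w(m,k)=0 for m<0 (i.e. k>n) *)
Definition diag (n : nat) : nat := \sum_(1 <= k < n.+1) w (n - k) k.

Definition diagGF (N : nat) : {poly int} := \sum_(n < N) (diag n)%:R *: 'X^n.

Definition denom : {poly int} :=
  (1 - 'X) ^+ 3 * (1 + 'X) * (1 - 2%:R *: 'X^2).

(* Main.v *)
Require Import Defs.
From mathcomp Require Import all_boot all_order all_algebra.
From mathcomp Require Import zify ring.
Import GRing.Theory.
Set Implicit Arguments. Unset Strict Implicit.

Definition all12 (s : seq nat) := all (fun x => (x == 1) || (x == 2)) s.
Definition mx (s : seq nat) := foldr maxn 0 s.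
Definition inner (s : seq nat) : nat :=
  \sum_(i < size s) (mx (drop i s) - nth 0 s i).

Lemma mx_le2 s : all12 s -> mx s <= 2.
Proof. elim: s => //= x s IH /andP[/orP[]/eqP-> /IH]; rewrite /mx /=; lia. Qed.

Lemma all12_take n s : all12 s -> all12 (take n s).
Proof. elim: s n => [|x s IH] [|n] //= /andP[-> H]; exact: IH. Qed.

Lemma nth_le_mx s i : i < size s -> nth 0 s i <= mx (take i.+1 s).
Proof.
elim: s i => [|x s IH] [|i] //=; rewrite /mx /= ?leq_maxl //.
move=> /IH; rewrite /mx => H; apply: leq_trans H (leq_maxr _ _).
Qed.

Lemma nth_ge1 s i : all12 s -> i < size s -> 1 <= nth 0 s i.
Proof.
elim: s i => [|x s IH] [|i] //= /andP[Hx H] Hi; last exact: IH.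
by case/orP: Hx => /eqP->.
Qed.

Lemma water_nil : water [::] = 0.
Proof. by rewrite /water big_ord0. Qed.

Lemma inner_nil : inner [::] = 0.
Proof. by rewrite /inner big_ord0. Qed.

Lemma water_cons x s :
  water (x :: s) = \sum_(i < size s)
     (minn (maxn x (mx (take i.+1 s))) (mx (drop i s)) - nth 0 s i).
Proof.
rewrite /water /= big_ord_recl /=.
match goal with |- ?a + _ = _ => have -> : a = 0 end.
  rewrite take0 /=; lia.
by rewrite add0n.
Qed.

Lemma water1 s : all12 s -> water (1 :: s) = water s.
Proof.
move=> H; rewrite water_cons /water; apply: eq_bigr => i _.
have h1 := nth_le_mx (ltn_ord i); have h2 := nth_ge1 H (ltn_ord i).
by rewrite /mx in h1 *; congr (minn _ _ - _); lia.
Qed.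

Lemma water2 s : all12 s -> water (2 :: s) = inner s.
Proof.
move=> H; rewrite water_cons /inner; apply: eq_bigr => i _.
have h1 := mx_le2 (all12_take i.+1 H).
have h2 : mx (drop i s) <= 2.
  apply: mx_le2; move: H; rewrite /all12 -{1}(cat_take_drop i s) all_cat.
  by case/andP.
congr (_ - _); lia.
Qed.

Lemma inner_cons x s : inner (x :: s) = (maxn x (mx s) - x) + inner s.
Proof. by rewrite /inner /= big_ord_recl. Qed.

Lemma mx1 s : all12 s -> maxn 1 (mx s) - 1 = (2 \in s).
Proof.
elim: s => //= x s IH /andP[/orP[]/eqP-> H]; rewrite in_cons /=;
  have := IH H; have := mx_le2 H; rewrite /mx /=; case: (2 \in s) => /=; lia.
Qed.

Lemma inner1 s : all12 s -> inner (1 :: s) = (2 \in s) + inner s.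
Proof. by move=> H; rewrite inner_cons mx1. Qed.

Lemma inner2 s : all12 s -> inner (2 :: s) = inner s.
Proof. by move=> H; rewrite inner_cons; have := mx_le2 H; lia. Qed.

Lemma inner0 s : all12 s -> 2 \notin s -> inner s = 0.
Proof.
elim: s => [|x s IH]; first by rewrite inner_nil.
move=> /andP[/orP[]/eqP-> H]; rewrite in_cons //= => Hn.
by rewrite inner1 // (negPf Hn) IH.
Qed.

Lemma size_sumn s : all12 s -> size s <= sumn s.
Proof. elim: s => //= x s IH /andP[/orP[]/eqP-> /IH]; lia. Qed.

Fixpoint T (t : nat) : seq (seq nat) :=
  if t is t'.+1 then map (cons 0) (T t') ++ map (cons 1) (T t') ++ map (cons 2) (T t')
  else [:: [::]].

Definition cnt (P : pred (seq nat)) (t : nat) := \sum_(j < t.+1) count P (T j).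

Lemma count_T (P : pred (seq nat)) t : count P (T t.+1) =
  count (fun s => P (0 :: s)) (T t) + count (fun s => P (1 :: s)) (T t)
  + count (fun s => P (2 :: s)) (T t).
Proof. by rewrite /= !count_cat !count_map addnA. Qed.

Lemma cnt0 (P : pred (seq nat)) : cnt P 0 = P [::].
Proof. by rewrite /cnt big_ord1 /= addn0. Qed.

Lemma cnt_step (P : pred (seq nat)) t : cnt P t.+1 = P [::] +
  (cnt (fun s => P (0 :: s)) t + cnt (fun s => P (1 :: s)) t + cnt (fun s => P (2 :: s)) t).
Proof.
rewrite /cnt big_ord_recl /= addn0; congr (_ + _).
by rewrite -!big_split /=; apply: eq_bigr => j _; rewrite count_T.
Qed.

Lemma size_T t (s : seq nat) : s \in T t -> size s = t.
Proof.
elim: t s => [|t IH] s /=; first by rewrite inE => /eqP->.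
by rewrite !mem_cat => /or3P[] /mapP[s' /IH <- ->].
Qed.

Lemma cnt_stable (P : pred (seq nat)) t : (forall s, P s -> size s <= t) -> cnt P t.+1 = cnt P t.
Proof.
move=> H; rewrite /cnt big_ord_recr /=.
rewrite (@eq_in_count _ _ pred0) ?count_pred0 ?addn0 //.
move=> s Hs0; have Hs := @size_T t.+1 s Hs0; apply/negP => /H; rewrite Hs; lia.
Qed.

Lemma cnt_mono (P : pred (seq nat)) t t' : (forall s, P s -> size s <= t) -> t <= t' -> cnt P t' = cnt P t.
Proof.
move=> H; elim: t' => [|t' IH]; first by rewrite leqn0 => /eqP->.
rewrite leq_eqVlt => /orP[/eqP<- //|Ht]; rewrite cnt_stable ?IH //.
move=> s /H; lia.
Qed.

Lemma cnt_ext (P Q : pred (seq nat)) t : P =1 Q -> cnt P t = cnt Q t.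
Proof. by move=> H; apply: eq_bigr => j _; apply: eq_count. Qed.

Lemma cnt_false (P : pred (seq nat)) t : P =1 pred0 -> cnt P t = 0.
Proof. by move=> H; rewrite (cnt_ext _ H) /cnt big1 // => j _; rewrite count_pred0. Qed.

Lemma mem_cons_map (a b : nat) s l : (a :: s \in map (cons b) l) = (a == b) && (s \in l).
Proof.
apply/mapP/andP => [[s' Hs' [-> ->]] //|[/eqP-> H]]; by exists s.
Qed.

Lemma mem_T t s : (s \in T t) = (size s == t) && all (fun x => x < 3) s.
Proof.
elim: t s => [|t IH] [|a s] //=.
  by rewrite !mem_cat; apply/or3P => -[] /mapP[? ?].
rewrite !mem_cat !mem_cons_map !IH eqSS.
by case: a => [|[|[|a]]] /=; rewrite ?orbF ?andbF.
Qed.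

Lemma uniq_T t : uniq (T t).
Proof.
have mapu : forall b (l : seq (seq nat)), uniq l -> uniq (map (cons b) l).
  by move=> b l Hl; rewrite map_inj_uniq // => x y [].
have disj : forall a b (l l' : seq (seq nat)), a != b ->
    ~~ has (mem (map (cons a) l)) (map (cons b) l').
  move=> a b l l' ab; apply/hasPn => s /mapP[s' _ ->].
  by rewrite /= mem_cons_map eq_sym (negbTE ab).
elim: t => //= t IH.
by rewrite !cat_uniq !mapu //= !andbT has_cat negb_or !disj.
Qed.

Lemma card_tuples (t : nat) (P : pred (seq nat)) :
  #|[set u : t.-tuple 'I_3 | P (map val u)]| = count P (T t).
Proof.
rewrite cardsE cardE /enum_mem size_filter -enumT.
transitivity (count P (map (fun u : t.-tuple 'I_3 => map val u) (enum {: t.-tuple 'I_3}))).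
  by rewrite count_map.
apply: (permP _) P; apply: uniq_perm; last first.
2: exact: uniq_T.
2: rewrite map_inj_uniq ?enum_uniq // => u v /= H; apply: val_inj; exact: (inj_map val_inj) H.
move=> s; rewrite mem_T; apply/mapP/andP => [[u _ ->]|[/eqP Hs Ha]].
  rewrite size_map size_tuple; split => //; rewrite all_map; apply/allP => x _ /=.
  exact: ltn_ord.
have Hsz : size (map (insubd (ord0 : 'I_3)) s) == t by rewrite size_map Hs.
exists (Tuple Hsz); first by rewrite mem_enum.
rewrite /= -map_comp -[LHS]map_id; apply/eq_in_map => x Hx /=.
by rewrite insubdK //; move/allP: Ha; apply.
Qed.

Lemma w_cnt m k : w m k = cnt (fun s => is_comp12 m s && (water s == k)) m.
Proof. by rewrite /w /cnt; apply: eq_bigr => t _; rewrite (card_tuples t (fun s => is_comp12 m s && (water s == k))). Qed.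

Lemma all12_0 s : all12 (0 :: s) = false. Proof. by []. Qed.
Lemma all12_1 s : all12 (1 :: s) = all12 s. Proof. by []. Qed.
Lemma all12_2 s : all12 (2 :: s) = all12 s. Proof. by []. Qed.

Definition PA n s := all12 s && (sumn s + water s == n) && (0 < water s).
Definition PB n s := all12 s && (sumn s + inner s == n) && (0 < inner s).
Definition PC n s := all12 s && (sumn s + inner s == n) && (2 \in s).
Definition PD n s := all12 s && (sumn s + inner s == n) && (2 \notin s).
Definition PE n s := all12 s && (sumn s + inner s == n).

Definition a n := cnt (PA n) n.
Definition b n := cnt (PB n) n.
Definition c n := cnt (PC n) n.
Definition d n := cnt (PD n) n.
Definition e n := cnt (PE n) n.

Lemma sz_ok n s f : all12 s -> sumn s + f == n -> size s <= n.
Proof. move=> H /eqP; have := size_sumn H; lia. Qed.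

Lemma stA n : forall s, PA n s -> size s <= n.
Proof. by move=> s /andP[/andP[H1 H2] _]; apply: sz_ok H1 H2. Qed.
Lemma stB n : forall s, PB n s -> size s <= n.
Proof. by move=> s /andP[/andP[H1 H2] _]; apply: sz_ok H1 H2. Qed.
Lemma stC n : forall s, PC n s -> size s <= n.
Proof. by move=> s /andP[/andP[H1 H2] _]; apply: sz_ok H1 H2. Qed.
Lemma stD n : forall s, PD n s -> size s <= n.
Proof. by move=> s /andP[/andP[H1 H2] _]; apply: sz_ok H1 H2. Qed.
Lemma stE n : forall s, PE n s -> size s <= n.
Proof. by move=> s /andP[H1 H2]; apply: sz_ok H1 H2. Qed.

Lemma a_SS n : a n.+2 = a n.+1 + b n.
Proof.
rewrite /a cnt_step.
have -> : PA n.+2 [::] = false by rewrite /PA water_nil.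
rewrite (@cnt_false _ n.+1) ?add0n; last by move=> s; rewrite /PA all12_0.
rewrite /b -(cnt_stable (@stB n)); congr (_ + _); apply: cnt_ext => s.
  rewrite /PA all12_1; case H: (all12 s) => //=; rewrite water1 //.
rewrite /PA /PB all12_2; case H: (all12 s) => //=; rewrite water2 //=.
Qed.

Lemma a0 : a 0 = 0.
Proof. by rewrite /a cnt0 /PA water_nil. Qed.

Lemma a1 : a 1 = 0.
Proof.
by rewrite /a cnt_step !cnt0 /PA water_nil water1 // water2 // inner_nil water_nil.
Qed.

Lemma count_split (P Q : pred (seq nat)) l :
  count P l = count (fun s => P s && Q s) l + count (fun s => P s && ~~ Q s) l.
Proof.
elim: l => //= x l ->; case: (P x); case: (Q x) => /=; lia.
Qed.

Lemma e_split n : e n = c n + d n.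
Proof.
rewrite /e /c /d /cnt -big_split /=; apply: eq_bigr => j _.
by rewrite (count_split _ (fun s => 2 \in s)).
Qed.

Lemma b_SS n : b n.+2 = c n + b n.
Proof.
rewrite /b cnt_step.
have -> : PB n.+2 [::] = false by rewrite /PB inner_nil.
rewrite (@cnt_false _ n.+1) ?add0n; last by move=> s; rewrite /PB all12_0.
rewrite /c -(cnt_stable (@stC n)) -(cnt_stable (@stB n)).
congr (_ + _); apply: cnt_ext => s.
  rewrite /PB /PC all12_1; case H: (all12 s) => //=; rewrite inner1 //.
  case H2: (2 \in s) => /=; first by rewrite !addSn !add0n addnS eqSS.
  have Hi : inner s = 0 by apply: inner0 => //; rewrite H2.
  by rewrite Hi addn0 andbF ltnn andbF.
rewrite /PB all12_2; case H: (all12 s) => //=; rewrite inner2 //=.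
Qed.

Lemma c_SS n : c n.+2 = c n + e n.
Proof.
rewrite /c cnt_step.
have -> : PC n.+2 [::] = false by rewrite /PC andbF.
rewrite (@cnt_false _ n.+1) ?add0n; last by move=> s; rewrite /PC all12_0.
rewrite /e -(cnt_stable (@stC n)) -(cnt_stable (@stE n)).
congr (_ + _); apply: cnt_ext => s.
  rewrite /PC all12_1; case H: (all12 s) => //=; rewrite inner1 // in_cons /=.
  case H2: (2 \in s) => /=; first by rewrite !addSn !add0n addnS eqSS.
  by rewrite !andbF.
rewrite /PC /PE all12_2; case H: (all12 s) => //=; rewrite inner2 // in_cons eqxx /= andbT.
  by apply/idP/idP => /eqP Hx; apply/eqP; lia.
Qed.

Lemma d_S n : d n.+1 = d n.
Proof.
rewrite /d cnt_step.
have -> : PD n.+1 [::] = false by rewrite /PD inner_nil.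
rewrite (@cnt_false _ n) ?add0n; last by move=> s; rewrite /PD all12_0.
rewrite (@cnt_false (fun s => PD n.+1 (2 :: s)) n) ?addn0;
  last by move=> s; rewrite /PD in_cons eqxx /= !andbF.
apply: cnt_ext => s.
rewrite /PD all12_1; case H: (all12 s) => //=; rewrite inner1 // in_cons /=.
case H2: (2 \in s) => /=; first by rewrite !andbF.
by rewrite add0n addSn eqSS.
Qed.

Lemma d0 : d 0 = 1.
Proof. by rewrite /d cnt0 /PD inner_nil. Qed.

Lemma d1 n : d n = 1.
Proof. by elim: n => [|n IH]; rewrite ?d0 ?d_S. Qed.

Lemma b0 : b 0 = 0.
Proof. by rewrite /b cnt0 /PB inner_nil. Qed.
Lemma b1 : b 1 = 0.
Proof. by rewrite /b cnt_step !cnt0 /PB inner_nil inner1 // inner2 // inner_nil. Qed.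
Lemma c0 : c 0 = 0.
Proof. by rewrite /c cnt0 /PC in_nil andbF. Qed.
Lemma c1 : c 1 = 0.
Proof. by rewrite /c cnt_step !cnt0 /PC inner_nil inner1 // inner2 // inner_nil. Qed.

Lemma sumind (x n : nat) : \sum_(1 <= k < n.+1) (x == k) = (0 < x) && (x <= n).
Proof.
elim: n => [|n IH]; first by rewrite big_geq //; case: x.
rewrite big_nat_recr //= IH.
case: (eqVneq x n.+1) => [->|Hne].
  by rewrite ltnn andbF leqnn.
by rewrite addn0 [x <= n.+1]leq_eqVlt (negbTE Hne) ltnS.
Qed.

Lemma diag_count n l :
  \sum_(1 <= k < n.+1) count (fun s => is_comp12 (n - k) s && (water s == k)) l
  = count (PA n) l.
Proof.
elim: l => [|x l IH]; first by rewrite big1.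
rewrite /= big_split /= IH; congr (_ + _).
rewrite (@eq_big_nat _ _ _ _ _ _ (fun k => (all12 x && (sumn x + water x == n)) * (water x == k))).
  rewrite -big_distrr /= sumind /PA.
  case: (all12 x) => //=; case E: (sumn x + water x == n) => //=.
  rewrite mul1n; move/eqP: E => E; have -> : water x <= n by lia.
  by rewrite andbT.
move=> k /andP[Hk1 Hk2]; rewrite /is_comp12 -/(all12 x).
case: (all12 x) => //=; case E: (water x == k) => /=; rewrite ?muln0 ?andbF //.
move/eqP: E => ->; rewrite muln1.
by congr (nat_of_bool _); apply/idP/idP => /eqP Hx; apply/eqP; lia.
Qed.

Lemma diag_a n : diag n = a n.
Proof.
rewrite /diag (@eq_big_nat _ _ _ _ _ _
   (fun k => cnt (fun s => is_comp12 (n - k) s && (water s == k)) n)); last first.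
  move=> k /andP[Hk1 Hk2]; rewrite w_cnt; symmetry; apply: cnt_mono; last by lia.
  move=> s /andP[/andP[H1 /eqP H2] _]; have := size_sumn H1; lia.
rewrite /a /cnt exchange_big /=; apply: eq_bigr => j _; exact: diag_count.
Qed.
Local Open Scope ring_scope.

Definition eqN (N : nat) (p q : {poly int}) := forall i, (i < N)%N -> p`_i = q`_i.

Lemma eqN_mull N r p q : eqN N p q -> eqN N (r * p) (r * q).
Proof.
move=> H i Hi; rewrite !coefM; apply: eq_bigr => j _; rewrite H //.
apply: leq_ltn_trans Hi; exact: leq_subr.
Qed.

Lemma eqN_trans N p q r : eqN N p q -> eqN N q r -> eqN N p r.
Proof. by move=> H1 H2 i Hi; rewrite H1 ?H2. Qed.

Definition PA' N := \poly_(i < N) ((a i)%:R : int).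
Definition PB' N := \poly_(i < N) ((b i)%:R : int).
Definition PC' N := \poly_(i < N) ((c i)%:R : int).
Definition PD' N := \poly_(i < N) ((d i)%:R : int).

Lemma E1 N : eqN N ((1 - 'X) * PA' N) ('X^2 * PB' N).
Proof.
move=> i Hi; rewrite mulrBl mul1r coefB coefXM coefXnM !coef_poly Hi.
case: i Hi => [|[|m]] Hi /=; rewrite ?a0 ?a1 ?if_same ?subr0 //.
have -> : (m.+2 - 2 = m)%N by lia.
rewrite (ltnW Hi) (ltnW (ltnW Hi)) a_SS natrD; ring.
Qed.

Lemma E2 N : eqN N ((1 - 'X^2) * PB' N) ('X^2 * PC' N).
Proof.
move=> i Hi; rewrite mulrBl mul1r coefB !coefXnM !coef_poly Hi.
case: i Hi => [|[|m]] Hi /=; rewrite ?b0 ?b1 ?if_same ?subr0 //.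
have -> : (m.+2 - 2 = m)%N by lia.
rewrite (ltnW (ltnW Hi)) b_SS natrD; ring.
Qed.

Lemma E3 N : eqN N ((1 - 'X^2 *+ 2) * PC' N) ('X^2 * PD' N).
Proof.
move=> i Hi; rewrite mulrBl mul1r coefB mulrnAl coefMn !coefXnM !coef_poly Hi.
case: i Hi => [|[|m]] Hi /=; rewrite ?c0 ?c1 ?if_same ?subr0 //.
have -> : (m.+2 - 2 = m)%N by lia.
rewrite (ltnW (ltnW Hi)) c_SS e_split !natrD; ring.
Qed.

Lemma E4 N : eqN N ((1 - 'X) * PD' N) 1.
Proof.
move=> i Hi; rewrite mulrBl mul1r coefB coefXM coef1 !coef_poly Hi.
case: i Hi => [|m] Hi /=; rewrite ?d1 ?if_same ?subr0 //.
by rewrite (ltnW Hi) subrr.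
Qed.

Unset Implicit Arguments.

Theorem mainTheorem8 :
  forall (N n : nat), (n < N)%N -> (diagGF N * denom)`_n = ('X^6 : {poly int})`_n.
Proof.
move=> N n Hn.
have -> : diagGF N = PA' N.
  by rewrite /diagGF /PA' poly_def; apply: eq_bigr => i _; rewrite diag_a.
have Hd : denom = ((1 - 'X^2 *+ 2) * (1 - 'X) * (1 - 'X^2)) * (1 - 'X).
  by rewrite /denom scaler_nat; ring.
rewrite mulrC Hd -[(_ * (1 - 'X)) * PA' N]mulrA.
have H : eqN N (((1 - 'X^2 *+ 2) * (1 - 'X) * (1 - 'X^2)) * ((1 - 'X) * PA' N)) 'X^6.
  apply: eqN_trans (@eqN_mull N _ _ _ (@E1 N)) _.
  rewrite (_ : _ * ('X^2 * PB' N) = ('X^2 * (1 - 'X^2 *+ 2) * (1 - 'X)) * ((1 - 'X^2) * PB' N)); last by ring.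
  apply: eqN_trans (@eqN_mull N _ _ _ (@E2 N)) _.
  rewrite (_ : _ * ('X^2 * PC' N) = ('X^4 * (1 - 'X)) * ((1 - 'X^2 *+ 2) * PC' N)); last first.
    by rewrite (_ : 'X^4 = 'X^2 * 'X^2 :> {poly int}) ?exprD //; ring.
  apply: eqN_trans (@eqN_mull N _ _ _ (@E3 N)) _.
  rewrite (_ : _ * ('X^2 * PD' N) = 'X^6 * ((1 - 'X) * PD' N)); last first.
    by rewrite (_ : 'X^6 = 'X^4 * 'X^2 :> {poly int}) ?exprD //; ring.
  apply: eqN_trans (@eqN_mull N _ _ _ (@E4 N)) _.
  by rewrite mulr1 => i.
exact: H n Hn.
Qed.
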